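(* Let $d=4$ and consider the channel $\mathcal C(\rho)=\sum_{k=1}^4\langle k|\rho|k\rangle\,\gamma_k$ with $\gamma_1=|1\rangle\langle1|$, $\gamma_2=\tfrac13|2\rangle\langle2|+\tfrac23|1\rangle\langle1|$, $\gamma_3=\tfrac23|2\rangle\langle2|+\tfrac13|1\rangle\langle1|$, $\gamma_4=|2\rangle\langle2|$. Then $\mathcal C$ maps every passive state to a passive state, and for $\rho=\tfrac13(|1\rangle\langle1|+|3\rangle\langle3|+|4\rangle\langle4|)$ one has $\mathsf{Erg}(\rho)=(E_4-E_2)/3$ and $\mathsf{Erg}(\mathcal C(\rho))=(E_2-E_1)/9$. Consequently, whenever $E_2-E_1>3(E_4-E_2)$, $\mathcal C$ is passivity-preserving but strictly increases the ergotropy of $\rho$.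
   Context: $S$ is a $d$-dimensional quantum system with non-degenerate Hamiltonian $H=\sum_{i=1}^d E_i|i\rangle\langle i|$, $E_1<\dots<E_d$. The ergotropy of a state $\rho$ is $\mathsf{Erg}(\rho)=\mathrm{Tr}[H\rho]-\min_U\mathrm{Tr}[HU\rho U^\dagger]$ (minimum over unitaries). A state is passive if it is of the form $\sum_i p_i|i\rangle\langle i|$ with $p_1\ge\dots\ge p_d$ (equivalently, it has zero ergotropy). *)

(* Defs.v *)
From HB Require Import structures.
From mathcomp Require Import all_boot all_order all_algebra.
From mathcomp Require Import classical_sets reals.
From mathcomp Require Import complex.
Set Implicit Arguments. Unset Strict Implicit. Unset Printing Implicit Defensive.
Import Order.TTheory GRing.Theory Num.Theory.
Local Open Scope ring_scope.

Section Quantum.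
Variable R : realType.
Local Notation C := R[i].

Definition adj {m n} (A : 'M[C]_(m, n)) : 'M[C]_(n, m) := (map_mx (fun z : C => z^*) A)^T.

Definition unitary {n} (U : 'M[C]_n) : Prop := U *m adj U = 1%:M.

Definition is_state {n} (rho : 'M[C]_n) : Prop :=
  [/\ adj rho = rho,
      forall v : 'cV[C]_n, 0 <= ((adj v) *m rho *m v) 0 0
    & \tr rho = 1].

Definition hamiltonian {n} (E : 'I_n -> R) : 'M[C]_n :=
  diag_mx (\row_i ((E i)%:C)%C).

(* energy Tr[H rho] (a real number for hermitian H, rho) *)
Definition energy {n} (E : 'I_n -> R) (rho : 'M[C]_n) : R :=
  complex.Re (\tr (hamiltonian E *m rho)).

Definition ergotropy {n} (E : 'I_n -> R) (rho : 'M[C]_n) : R :=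
  energy E rho -
  inf [set e : R | exists U : 'M[C]_n, unitary U /\ e = energy E (U *m rho *m adj U)].

Definition passive {n} (rho : 'M[C]_n) : Prop :=
  is_state rho /\
  exists p : 'I_n -> R,
    rho = diag_mx (\row_i ((p i)%:C)%C) /\
    (forall i j : 'I_n, (i <= j)%N -> p j <= p i).

(* |k><k| in C^4, with the paper's label k in 1..4 being ordinal k-1 *)
Definition proj4 (k : 'I_4) : 'M[C]_4 := delta_mx k k.

Definition ket1 : 'I_4 := @Ordinal 4 0 erefl.
Definition ket2 : 'I_4 := @Ordinal 4 1 erefl.
Definition ket3 : 'I_4 := @Ordinal 4 2 erefl.
Definition ket4 : 'I_4 := @Ordinal 4 3 erefl.

Definition gamma (k : 'I_4) : 'M[C]_4 :=
  if k == ket1 then proj4 ket1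
  else if k == ket2 then (1/3) *: proj4 ket2 + (2/3) *: proj4 ket1
  else if k == ket3 then (2/3) *: proj4 ket2 + (1/3) *: proj4 ket1
  else proj4 ket2.

Definition channel (rho : 'M[C]_4) : 'M[C]_4 :=
  \sum_(k < 4) rho k k *: gamma k.

Definition rho0 : 'M[C]_4 :=
  (1/3) *: (proj4 ket1 + proj4 ket3 + proj4 ket4).

End Quantum.

(* Main.v *)
Require Import Defs.
From HB Require Import structures.
From mathcomp Require Import all_boot all_order all_algebra.
From mathcomp Require Import classical_sets reals.
From mathcomp Require Import complex.
From mathcomp Require Import fingroup perm ring lra.
Import Order.TTheory GRing.Theory Num.Theory.
Local Open Scope ring_scope.

Section H.
Variable R : realType.
Local Notation C := R[i].

Definition nrm (z : C) : R := complex.Re z ^+ 2 + complex.Im z ^+ 2.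

Lemma nrm_ge0 z : 0 <= nrm z.
Proof. by rewrite /nrm addr_ge0 // sqr_ge0. Qed.

Lemma ReD (x y : C) : complex.Re (x + y) = complex.Re x + complex.Re y.
Proof. by case: x; case: y. Qed.

Lemma ReS n (F : 'I_n -> C) : complex.Re (\sum_i F i) = \sum_i complex.Re (F i).
Proof. apply: (big_morph _ ReD); by []. Qed.

Lemma Re_zz (z : C) : complex.Re (z * Num.conj z) = nrm z.
Proof. case: z => a b; rewrite /nrm /=. ring. Qed.

Lemma Re_zz' (z : C) : complex.Re (Num.conj z * z) = nrm z.
Proof. by rewrite mulrC Re_zz. Qed.

Lemma Re_term (e dd : R) (z : C) :
  complex.Re ((e%:C)%C * (z * (dd%:C)%C * Num.conj z)) = e * (dd * nrm z).
Proof. case: z => a b; rewrite /nrm /=. ring. Qed.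

Lemma conjR (x : R) : Num.conj ((x%:C)%C : C) = (x%:C)%C.
Proof. exact: conjc_real. Qed.

Lemma energy_formula n (E : 'I_n -> R) (U : 'M[C]_n) (d : 'I_n -> R) :
  energy E (U *m diag_mx (\row_j ((d j)%:C)%C) *m adj U) =
  \sum_i E i * \sum_j d j * nrm (U i j).
Proof.
rewrite /energy /hamiltonian mul_diag_mx /mxtrace ReS; apply: eq_bigr => i _.
rewrite !mxE mulr_sumr ReS mulr_sumr; apply: eq_bigr => j _.
by rewrite mul_mx_diag !mxE Re_term.
Qed.

Lemma energy_diag n (E : 'I_n -> R) (d : 'I_n -> R) :
  energy E (diag_mx (\row_j ((d j)%:C)%C)) = \sum_i E i * d i.
Proof.
rewrite /energy /hamiltonian mul_diag_mx /mxtrace ReS; apply: eq_bigr => i _.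
rewrite !mxE eqxx mulr1n /=. ring.
Qed.

Lemma unit_rows n (U : 'M[C]_n) : unitary U -> forall i, \sum_j nrm (U i j) = 1.
Proof.
move=> hU i; have := congr1 (fun M : 'M[C]_n => complex.Re (M i i)) hU.
rewrite /= !mxE eqxx /= ReS => <-; apply: eq_bigr => j _.
by rewrite !mxE Re_zz.
Qed.

Lemma unit_cols n (U : 'M[C]_n) : unitary U -> forall j, \sum_i nrm (U i j) = 1.
Proof.
move=> /mulmx1C hU j; have := congr1 (fun M : 'M[C]_n => complex.Re (M j j)) hU.
rewrite /= !mxE eqxx /= ReS => <-; apply: eq_bigr => i _.
by rewrite !mxE Re_zz'.
Qed.

Lemma inf_min (S : set R) m : S m -> (forall x, S x -> m <= x) -> inf S = m.
Proof.
move=> Sm lb; apply/le_anti/andP; split.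
- have hl : has_lbound S by exists m.
  exact: (ge_inf hl Sm).
- by apply: lb_le_inf; [exists m | ].
Qed.

Lemma sum4 (V : zmodType) (F : 'I_4 -> V) :
  \sum_i F i = F ket1 + F ket2 + F ket3 + F ket4.
Proof.
rewrite !big_ord_recl big_ord0 addr0 !addrA.
by congr (F _ + F _ + F _ + F _); apply: val_inj.
Qed.

Lemma addE (A B : 'M[C]_4) i j : (A + B) i j = A i j + B i j.
Proof. by rewrite !mxE. Qed.
Lemma sclE a (A : 'M[C]_4) i j : (a *: A) i j = a * A i j.
Proof. by rewrite !mxE. Qed.
Lemma deltaE k l i j : (delta_mx k l : 'M[C]_4) i j = ((i == k) && (j == l))%:R.
Proof. by rewrite !mxE. Qed.
Lemma diagE' (d : 'I_4 -> C) i j : diag_mx (\row_k d k) i j = d i *+ (i == j).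
Proof. by rewrite !mxE. Qed.
Lemma diagE n (d : 'I_n -> C) k : diag_mx (\row_j d j) k k = d k.
Proof. by rewrite !mxE eqxx mulr1n. Qed.
Lemma case4 (P : 'I_4 -> Prop) : P ket1 -> P ket2 -> P ket3 -> P ket4 -> forall i, P i.
Proof.
move=> h1 h2 h3 h4 [[|[|[|[|//]]]] hi].
- by have -> : Ordinal hi = ket1 by apply: val_inj.
- by have -> : Ordinal hi = ket2 by apply: val_inj.
- by have -> : Ordinal hi = ket3 by apply: val_inj.
- by have -> : Ordinal hi = ket4 by apply: val_inj.
Qed.
Lemma e12 : (ket1 == ket2) = false. Proof. by []. Qed.
Lemma e13 : (ket1 == ket3) = false. Proof. by []. Qed.
Lemma e14 : (ket1 == ket4) = false. Proof. by []. Qed.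
Lemma e21 : (ket2 == ket1) = false. Proof. by []. Qed.
Lemma e23 : (ket2 == ket3) = false. Proof. by []. Qed.
Lemma e24 : (ket2 == ket4) = false. Proof. by []. Qed.
Lemma e31 : (ket3 == ket1) = false. Proof. by []. Qed.
Lemma e32 : (ket3 == ket2) = false. Proof. by []. Qed.
Lemma e34 : (ket3 == ket4) = false. Proof. by []. Qed.
Lemma e41 : (ket4 == ket1) = false. Proof. by []. Qed.
Lemma e42 : (ket4 == ket2) = false. Proof. by []. Qed.
Lemma e43 : (ket4 == ket3) = false. Proof. by []. Qed.
Lemma cst (a b : nat) : ((a%:R / b%:R : R)%:C)%C = a%:R / b%:R :> C.
Proof. by rewrite fmorph_div !rmorph_nat. Qed.
Lemma cst1 (b : nat) : (((1 / b%:R) : R)%:C)%C = 1 / b%:R :> C.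
Proof. by rewrite fmorph_div rmorph1 rmorph_nat. Qed.
End H.
Section Gen.
Variable K : numClosedFieldType.

Lemma quad_diag_ge0 n (v : 'cV[K]_n) (d : 'I_n -> K) : (forall i, 0 <= d i) ->
  0 <= ((map_mx (fun z => Num.conj z) v)^T *m diag_mx (\row_i d i) *m v) 0 0.
Proof.
move=> h; rewrite mul_mx_diag !mxE; apply: sumr_ge0 => i _; rewrite !mxE.
by rewrite mulrAC mulr_ge0 // mulrC mul_conjC_ge0.
Qed.

Lemma quad_diag_delta n (d : 'I_n -> K) k :
  ((map_mx (fun z => Num.conj z) (delta_mx k 0 : 'cV[K]_n))^T *m diag_mx (\row_i d i)
     *m (delta_mx k 0 : 'cV[K]_n)) 0 0 = d k.
Proof.
rewrite mul_mx_diag !mxE (bigD1 k) //= big1 ?addr0.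
  by rewrite !mxE !eqxx /= conjC1 mul1r mulr1.
by move=> i /negbTE hi; rewrite !mxE hi /= mulr0.
Qed.

Lemma adj_diag n (d : 'I_n -> K) : (forall i, Num.conj (d i) = d i) ->
  (map_mx (fun z => Num.conj z) (diag_mx (\row_i d i)))^T = diag_mx (\row_i d i).
Proof.
move=> h; apply/matrixP => i j; rewrite !mxE eq_sym.
by case: eqP => [->|_]; rewrite ?mulr1n ?mulr0n ?h ?conjC0.
Qed.

Lemma perm_unitary n (s : {perm 'I_n}) :
  perm_mx s *m (map_mx (fun z => Num.conj z) (perm_mx s : 'M[K]_n))^T = 1%:M.
Proof.
have -> : map_mx (fun z => Num.conj z) (perm_mx s : 'M[K]_n) = perm_mx s.
  by apply/matrixP => i j; rewrite !mxE conjC_nat.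
by rewrite tr_perm_mx -perm_mxM mulgV perm_mx1.
Qed.

Lemma perm_entry n (s : {perm 'I_n}) i j : (perm_mx s : 'M[K]_n) i j = (s i == j)%:R.
Proof. by rewrite !mxE. Qed.
End Gen.

Lemma rho_gen (K : comNzRingType) (t : K) :
  t *: (delta_mx ket1 ket1 + delta_mx ket3 ket3 + delta_mx ket4 ket4)
  = diag_mx (\row_j (if val j == 1%N then 0 else t)) :> 'M[K]_4.
Proof.
apply/matrixP => i j; rewrite !mxE.
by elim/case4: i; elim/case4: j => /=; ring.
Qed.
Lemma gen (K : comNzRingType) (a b c d t u : K) :
  a *: delta_mx ket1 ket1 + b *: (t *: delta_mx ket2 ket2 + u *: delta_mx ket1 ket1)
  + c *: (u *: delta_mx ket2 ket2 + t *: delta_mx ket1 ket1) + d *: delta_mx ket2 ket2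
  = diag_mx (\row_j (if val j == 0%N then a + b*u + c*t else if val j == 1%N then b*t + c*u + d else 0)) :> 'M[K]_4.
Proof.
apply/matrixP => i j; rewrite !mxE.
by elim/case4: i; elim/case4: j => /=; ring.
Qed.
Section H.
Variable R : realType.
Local Notation C := R[i].
Lemma g1 : gamma R ket1 = proj4 R ket1. Proof. by rewrite /gamma eqxx. Qed.
Lemma g2 : gamma R ket2 = (1/3) *: proj4 R ket2 + (2/3) *: proj4 R ket1.
Proof. by rewrite /gamma e21 eqxx. Qed.
Lemma g3 : gamma R ket3 = (2/3) *: proj4 R ket2 + (1/3) *: proj4 R ket1.
Proof. by rewrite /gamma e31 e32 eqxx. Qed.
Lemma g4 : gamma R ket4 = proj4 R ket2.
Proof. by rewrite /gamma e41 e42 e43. Qed.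
Definition qch (p : 'I_4 -> R) (i : 'I_4) : R :=
  if val i == 0%N then p ket1 + 2/3 * p ket2 + 1/3 * p ket3
  else if val i == 1%N then 1/3 * p ket2 + 2/3 * p ket3 + p ket4 else 0.

Lemma channel_diag (p : 'I_4 -> R) :
  channel (diag_mx (\row_j ((p j)%:C)%C)) = diag_mx (\row_j ((qch p j)%:C)%C).
Proof.
rewrite /channel sum4 !diagE g1 g2 g3 g4 /proj4.
rewrite gen.
congr diag_mx; apply/rowP => j; rewrite !mxE.
elim/case4: j; rewrite /qch /= ?rmorph0 // !rmorphD !rmorphM !fmorphV !rmorph_nat ?rmorph1 //.
all: ring.
Qed.
End H.

Section H.
Variable R : realType.
Local Notation C := R[i].

Lemma state_diag n (q : 'I_n -> R) : (forall i, 0 <= q i) -> \sum_i q i = 1 ->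
  is_state (diag_mx (\row_i ((q i)%:C)%C : 'rV[C]_n)).
Proof.
move=> h hs; split.
- rewrite /adj; apply: adj_diag => i; exact: conjc_real.
- move=> v; rewrite /adj; apply: quad_diag_ge0 => i; by rewrite ler0c.
- rewrite mxtrace_diag.
  under eq_bigr do rewrite mxE.
  by rewrite -rmorph_sum hs rmorph1.
Qed.

Lemma state_diag_inv n (q : 'I_n -> R) :
  is_state (diag_mx (\row_i ((q i)%:C)%C : 'rV[C]_n)) ->
  (forall i, 0 <= q i) /\ \sum_i q i = 1.
Proof.
case=> _ hpsd htr; split.
- move=> i; have := hpsd (delta_mx i 0); rewrite /adj quad_diag_delta.
  by rewrite ler0c.
- move: htr; rewrite mxtrace_diag.
  under eq_bigr do rewrite mxE.
  by rewrite -rmorph_sum -(rmorph1 (real_complex R)) => /complexI.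
Qed.

Lemma passive_channel (rho : 'M[C]_4) : passive rho -> passive (channel rho).
Proof.
move=> [hs [p [hrho hp]]]; rewrite hrho in hs *.
have [p0 ps] := @state_diag_inv _ _ hs.
rewrite sum4 in ps.
have h12 := hp ket1 ket2 erefl; have h23 := hp ket2 ket3 erefl.
have h34 := hp ket3 ket4 erefl; have q4 := p0 ket4.
rewrite channel_diag; split.
- apply: state_diag.
  + by elim/case4; rewrite /qch /=; lra.
  + by rewrite sum4 /qch /=; lra.
- exists (qch R p); split => //.
  by elim/case4; elim/case4; rewrite /qch /= => // _; lra.
Qed.
End H.

Section H.
Variable R : realType.
Local Notation C := R[i].

Definition d0 (j : 'I_4) : R := if val j == 1%N then 0 else 1/3.

Lemma rho0_diag : rho0 R = diag_mx (\row_j ((d0 j)%:C)%C).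
Proof.
rewrite /rho0 /proj4 rho_gen; congr diag_mx; apply/rowP => j; rewrite !mxE.
by elim/case4: j; rewrite /d0 /= ?rmorph0 // fmorph_div rmorph1 rmorph_nat.
Qed.

Lemma nrm_nat (b : bool) : nrm R (b%:R) = b%:R.
Proof. by case: b; rewrite /nrm /= ?expr0n /= ?expr1n ?addr0. Qed.

Lemma energy_perm n (E : 'I_n -> R) (s : {perm 'I_n}) (d : 'I_n -> R) :
  energy E (perm_mx s *m diag_mx (\row_j ((d j)%:C)%C) *m adj (perm_mx s)) =
  \sum_i E i * d (s i).
Proof.
rewrite energy_formula; apply: eq_bigr => i _; congr (_ * _).
rewrite (bigD1 (s i)) //= big1 ?addr0; first by rewrite perm_entry eqxx nrm_nat mulr1.
by move=> j /negbTE hj; rewrite perm_entry eq_sym hj nrm_nat mulr0.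
Qed.

Lemma perm_unit n (s : {perm 'I_n}) : unitary (perm_mx s : 'M[C]_n).
Proof. exact: perm_unitary. Qed.

Lemma lb_rho0 (E : 'I_4 -> R) (hE : forall i j : 'I_4, (i < j)%N -> E i < E j)
  (U : 'M[C]_4) : unitary U ->
  (E ket1 + E ket2 + E ket3) / 3 <= energy E (U *m diag_mx (\row_j ((d0 j)%:C)%C) *m adj U).
Proof.
move=> hU; rewrite energy_formula !sum4 /d0 /=.
have r1 := @unit_rows _ _ _ hU ket1; have r2 := @unit_rows _ _ _ hU ket2.
have r3 := @unit_rows _ _ _ hU ket3; have r4 := @unit_rows _ _ _ hU ket4.
have c2 := @unit_cols _ _ _ hU ket2.
rewrite !sum4 in r1 r2 r3 r4 c2.
have e14 := hE ket1 ket4 erefl; have e24 := hE ket2 ket4 erefl; have e34 := hE ket3 ket4 erefl.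
have h1 : 0 <= (E ket4 - E ket1) * nrm R (U ket1 ket2) by rewrite mulr_ge0 ?nrm_ge0 // subr_ge0 ltW.
have h2 : 0 <= (E ket4 - E ket2) * nrm R (U ket2 ket2) by rewrite mulr_ge0 ?nrm_ge0 // subr_ge0 ltW.
have h3 : 0 <= (E ket4 - E ket3) * nrm R (U ket3 ket2) by rewrite mulr_ge0 ?nrm_ge0 // subr_ge0 ltW.
have i1 := congr1 (fun x => E ket1 * x) r1; have i2 := congr1 (fun x => E ket2 * x) r2.
have i3 := congr1 (fun x => E ket3 * x) r3; have i4 := congr1 (fun x => E ket4 * x) r4.
have j2 := congr1 (fun x => E ket4 * x) c2.
simpl in i1, i2, i3, i4, j2.
lra.
Qed.
Lemma lb_ch (E : 'I_4 -> R) (hE : forall i j : 'I_4, (i < j)%N -> E i < E j)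
  (U : 'M[C]_4) : unitary U ->
  5/9 * E ket1 + 4/9 * E ket2 <= energy E (U *m diag_mx (\row_j ((qch R d0 j)%:C)%C) *m adj U).
Proof.
move=> hU; rewrite energy_formula !sum4 /qch /d0 /=.
have r1 := @unit_rows _ _ _ hU ket1.
have c1 := @unit_cols _ _ _ hU ket1; have c2 := @unit_cols _ _ _ hU ket2.
rewrite !sum4 in r1 c1 c2.
have e12 := hE ket1 ket2 erefl; have e23 := hE ket2 ket3 erefl; have e24 := hE ket2 ket4 erefl.
have n11 := nrm_ge0 R (U ket1 ket1); have n12 := nrm_ge0 R (U ket1 ket2).
have n13 := nrm_ge0 R (U ket1 ket3); have n14 := nrm_ge0 R (U ket1 ket4).
have n31 := nrm_ge0 R (U ket3 ket1); have n32 := nrm_ge0 R (U ket3 ket2).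
have n41 := nrm_ge0 R (U ket4 ket1); have n42 := nrm_ge0 R (U ket4 ket2).
have h3 : 0 <= (E ket3 - E ket2) * (4/9 * nrm R (U ket3 ket1) + 5/9 * nrm R (U ket3 ket2)).
  by apply: mulr_ge0; lra.
have h4 : 0 <= (E ket4 - E ket2) * (4/9 * nrm R (U ket4 ket1) + 5/9 * nrm R (U ket4 ket2)).
  by apply: mulr_ge0; lra.
have h1 : 0 <= (E ket2 - E ket1) * (5/9 - (4/9 * nrm R (U ket1 ket1) + 5/9 * nrm R (U ket1 ket2))).
  by apply: mulr_ge0; lra.
have j1 := congr1 (fun x => E ket2 * x) c1; have j2 := congr1 (fun x => E ket2 * x) c2.
simpl in j1, j2.
lra.
Qed.

Lemma tp1 : tperm ket2 ket4 ket1 = ket1. Proof. by rewrite tpermD ?e21 ?e41. Qed.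
Lemma tp3 : tperm ket2 ket4 ket3 = ket3. Proof. by rewrite tpermD ?e23 ?e43. Qed.
Lemma tq3 : tperm ket1 ket2 ket3 = ket3. Proof. by rewrite tpermD ?e13 ?e23. Qed.
Lemma tq4 : tperm ket1 ket2 ket4 = ket4. Proof. by rewrite tpermD ?e14 ?e24. Qed.

End H.

Section H.
Variable R : realType.
Local Notation C := R[i].
Lemma I1 (E : 'I_4 -> R)
  (hE : forall i j : 'I_4, (i < j)%N -> E i < E j) : inf [set e : R | exists U : 'M[C]_4, unitary U /\
     e = energy E (U *m diag_mx (\row_j ((d0 R j)%:C)%C) *m adj U)]
     = (E ket1 + E ket2 + E ket3) / 3.
Proof.
  apply: inf_min.
    exists (perm_mx (tperm ket2 ket4)); split; first exact: perm_unit.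
    rewrite energy_perm sum4 tp1 tp3 tpermL tpermR /d0 /=.
    lra.
  by move=> x [U [hU ->]]; apply: lb_rho0.
Qed.
Lemma I2 (E : 'I_4 -> R)
  (hE : forall i j : 'I_4, (i < j)%N -> E i < E j) : inf [set e : R | exists U : 'M[C]_4, unitary U /\
     e = energy E (U *m diag_mx (\row_j ((qch R (d0 R) j)%:C)%C) *m adj U)]
     = 5/9 * E ket1 + 4/9 * E ket2.
Proof.
  apply: inf_min.
    exists (perm_mx (tperm ket1 ket2)); split; first exact: perm_unit.
    rewrite energy_perm sum4 tq3 tq4 tpermL tpermR /qch /d0 /=.
    lra.
  by move=> x [U [hU ->]]; apply: lb_ch.
Qed.
Lemma A (E : 'I_4 -> R)
  (hE : forall i j : 'I_4, (i < j)%N -> E i < E j) : ergotropy E (rho0 R) = (E ket4 - E ket2) / 3.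
Proof.
  rewrite /ergotropy rho0_diag.
  rewrite I1 //.
  rewrite energy_diag sum4 /d0 /=.
  lra.
Qed.
Lemma B (E : 'I_4 -> R)
  (hE : forall i j : 'I_4, (i < j)%N -> E i < E j) : ergotropy E (channel (rho0 R)) = (E ket2 - E ket1) / 9.
Proof.
  rewrite /ergotropy rho0_diag channel_diag.
  rewrite I2 //.
  rewrite energy_diag sum4 /qch /d0 /=.
  lra.
Qed.
End H.
Lemma fin_ineq (K : realFieldType) (a b d : K) :
  b - a > 3 * (d - b) -> (d - b) / 3 < (b - a) / 9.
Proof. move=> h; lra. Qed.

Theorem mainTheorem2 (R : realType) (E : 'I_4 -> R)
  (hE : forall i j : 'I_4, (i < j)%N -> E i < E j) :
  (forall rho : 'M[R[i]]_4, passive rho -> passive (channel rho)) /\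
  ergotropy E (rho0 R) = (E ket4 - E ket2) / 3 /\
  ergotropy E (channel (rho0 R)) = (E ket2 - E ket1) / 9 /\
  (E ket2 - E ket1 > 3 * (E ket4 - E ket2) ->
     (forall rho : 'M[R[i]]_4, passive rho -> passive (channel rho)) /\
     ergotropy E (rho0 R) < ergotropy E (channel (rho0 R))).
Proof.
have hP := passive_channel R.
have hA := @A R E hE; have hB := @B R E hE.
split; first exact: hP.
split; first exact: hA.
split; first exact: hB.
move=> h; split; first exact: hP.
rewrite hA hB; exact: fin_ineq.
Qed.
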